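(* Let $(X,\mathbf R)$ be a symmetric association scheme with $D$ classes, cometric with respect to $E_0,\dots,E_D$. Fix $x\in X$, let $T=T(x)$, let $\chi\in V$ be a code and set $\delta^*=\delta^*(\chi)$. Suppose $t\in\{1,\dots,D\}$ is such that $$|\{i\in W_s: E_i^*(x)\chi\ne0\}|\le \delta^*-r^*(W)$$ for every irreducible $T$-module $W\subseteq V$ with $1\le r^*(W)\le t$. If every irreducible $T$-module in $V$ with dual endpoint at most $t$ is dual thin, then $F\chi$ is a relative $t$-design with respect to $x$ for every $F\in T$.
   Context: $(X,\mathbf R)$ is a symmetric association scheme with associate matrices $A_0=I,\dots,A_D$, Bose–Mesner algebra $M$, primitive idempotents $E_0=|X|^{-1}J,\dots,E_D$; cometric means each $E_j$ is a polynomial of degree exactly $j$ in $E_1$ under entrywise multiplication. $V=\mathbb C^X$ with standard basis $\{\hat y\}$ and standard Hermitian inner product. $E_i^*(x)$ is diagonal with $(E_i^*(x))_{yy}=(A_i)_{xy}$; $A_i^*(x)$ is diagonal with $(A_i^*(x))_{yy}=|X|(E_i)_{xy}$; $T(x)$ is generated by $M$ and the $A_i^*(x)$. For an irreducible $T(x)$-module $W$: support $W_s=\{i:E_i^*(x)W\ne0\}$, dual endpoint $r^*(W)=\min\{j:E_jW\neq0\}$, dual thin means $\dim E_jW\le1$ for all $j$. A code is a vector $\chi\notin E_0V$ with $\chi\notin E_0^*(z)V$ for all $z$. $\delta^*(\chi)=\min\{j\ne0:E_j\chi\ne0\}$. $\psi$ is a relative $t$-design with respect to $x$ if $E_j\psi$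 and $E_j\hat x$ are linearly dependent for all $1\le j\le t$. *)

(* Defs.v *)
(* MathComp world. Vertex set X = 'I_n, V = C^X = 'cV[algC]_n. *)
From HB Require Import structures.
From mathcomp Require Import all_boot all_order all_algebra all_field.
Set Implicit Arguments. Unset Strict Implicit. Unset Printing Implicit Defensive.
Import Order.TTheory GRing.Theory Num.Theory.
Local Open Scope ring_scope.

(* Symmetric association scheme with D classes: A_0,...,A_D. *)
Definition is_sym_assoc_scheme (n D : nat) (A : 'I_D.+1 -> 'M[algC]_n) : Prop :=
  [/\ A ord0 = 1%:M,
      \sum_(i < D.+1) A i = const_mx 1,
      (forall i y z, A i y z = 0 \/ A i y z = 1) /\ (forall i, A i != 0),
      forall i, (A i)^T = A i
    & forall i j, exists c : 'I_D.+1 -> algC, A i *m A j = \sum_(k < D.+1) c k *: A k].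

(* Membership in the Bose-Mesner algebra M = span{A_i}. *)
Definition in_BM (n D : nat) (A : 'I_D.+1 -> 'M[algC]_n) (M : 'M[algC]_n) : Prop :=
  exists c : 'I_D.+1 -> algC, M = \sum_(k < D.+1) c k *: A k.

(* E_0,...,E_D are the primitive idempotents of M, with E_0 = |X|^-1 J. *)
Definition is_prim_idems (n D : nat) (A E : 'I_D.+1 -> 'M[algC]_n) : Prop :=
  [/\ E ord0 = (n%:R)^-1 *: const_mx 1,
      forall i, in_BM A (E i),
      forall i j, E i *m E j = (if i == j then E i else 0),
      \sum_(i < D.+1) E i = 1%:M
    & forall i, E i != 0].

(* Entrywise (Hadamard) product and powers. *)
Definition hmul (n : nat) (M N : 'M[algC]_n) : 'M[algC]_n := map2_mx *%R M N.
Definition hpow (n : nat) (M : 'M[algC]_n) (k : nat) : 'M[algC]_n :=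
  iter k (hmul M) (const_mx 1).

(* Cometric: each E_j is a polynomial of degree exactly j in E_1 under o. *)
Definition is_cometric (n D : nat) (E : 'I_D.+1 -> 'M[algC]_n) : Prop :=
  forall j : 'I_D.+1, exists p : {poly algC},
    size p = j.+1 /\ E j = \sum_(k < size p) p`_k *: hpow (E (inord 1)) k.

(* Dual idempotents E_i^*(x) and dual adjacency matrices A_i^*(x). *)
Definition Estar (n D : nat) (A : 'I_D.+1 -> 'M[algC]_n) (x : 'I_n) (i : 'I_D.+1)
  : 'M[algC]_n := diag_mx (row x (A i)).
Definition Astar (n D : nat) (E : 'I_D.+1 -> 'M[algC]_n) (x : 'I_n) (i : 'I_D.+1)
  : 'M[algC]_n := diag_mx (n%:R *: row x (E i)).

(* The Terwilliger algebra T(x): generated by M and the A_i^*(x). *)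
Inductive inT (n D : nat) (A E : 'I_D.+1 -> 'M[algC]_n) (x : 'I_n) : 'M[algC]_n -> Prop :=
| inT_A i : inT A E x (A i)
| inT_Astar i : inT A E x (Astar E x i)
| inT_1 : inT A E x 1%:M
| inT_add F G : inT A E x F -> inT A E x G -> inT A E x (F + G)
| inT_scale (c : algC) F : inT A E x F -> inT A E x (c *: F)
| inT_mul F G : inT A E x F -> inT A E x G -> inT A E x (F *m G).

(* Subspaces of V are represented by matrices W whose row space is
   {v^T : v in W}. *)
Definition inW (n : nat) (W : 'M[algC]_n) (v : 'cV[algC]_n) : bool := (v^T <= W)%MS.
(* The subspace F W = {F v : v in W}. *)
Definition imW (n : nat) (F W : 'M[algC]_n) : 'M[algC]_n := W *m F^T.

Definition is_Tmodule (n D : nat) (A E : 'I_D.+1 -> 'M[algC]_n) (x : 'I_n)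
  (W : 'M[algC]_n) : Prop :=
  forall F, inT A E x F -> forall v, inW W v -> inW W (F *m v).

Definition irreducible_Tmodule (n D : nat) (A E : 'I_D.+1 -> 'M[algC]_n) (x : 'I_n)
  (W : 'M[algC]_n) : Prop :=
  [/\ is_Tmodule A E x W, W != 0 &
      forall U, is_Tmodule A E x U -> (U <= W)%MS -> U == 0 \/ (U == W)%MS].

(* Dual endpoint r^*(W) = min {j : E_j W <> 0}. *)
Definition rstar (n D : nat) (E : 'I_D.+1 -> 'M[algC]_n) (W : 'M[algC]_n) : nat :=
  \big[minn/D.+1]_(j < D.+1 | imW (E j) W != 0) (j : nat).

(* Support W_s. *)
Definition Wsupport (n D : nat) (A : 'I_D.+1 -> 'M[algC]_n) (x : 'I_n)
  (W : 'M[algC]_n) : {set 'I_D.+1} :=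
  [set i | imW (Estar A x i) W != 0].

Definition dual_thin (n D : nat) (E : 'I_D.+1 -> 'M[algC]_n) (W : 'M[algC]_n) : Prop :=
  forall j, (\rank (imW (E j) W) <= 1)%N.

(* A code: chi not in E_0 V and not in E_0^*(z) V for any z. *)
Definition is_code (n D : nat) (A E : 'I_D.+1 -> 'M[algC]_n) (chi : 'cV[algC]_n) : Prop :=
  ~ (exists w, chi = E ord0 *m w) /\
  forall z : 'I_n, ~ (exists w, chi = Estar A z ord0 *m w).

(* delta^*(chi) = min {j <> 0 : E_j chi <> 0}. *)
Definition deltastar (n D : nat) (E : 'I_D.+1 -> 'M[algC]_n) (chi : 'cV[algC]_n) : nat :=
  \big[minn/D.+1]_(j < D.+1 | (j != ord0) && (E j *m chi != 0)) (j : nat).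

(* Relative t-design with respect to x. *)
Definition rel_design (n D : nat) (E : 'I_D.+1 -> 'M[algC]_n) (t : nat) (x : 'I_n)
  (psi : 'cV[algC]_n) : Prop :=
  forall j : 'I_D.+1, (1 <= j <= t)%N ->
    exists a b : algC, (a != 0 \/ b != 0) /\
      a *: (E j *m psi) + b *: (E j *m delta_mx x ord0) = 0.

(* Main.v *)
Require Import Defs.
From HB Require Import structures.
From mathcomp Require Import all_boot all_order all_algebra all_field.
From mathcomp Require Import ring zify.
From Stdlib Require Import Classical.
Import Order.TTheory GRing.Theory Num.Theory.
Local Open Scope ring_scope.
Set Implicit Arguments. Unset Strict Implicit. Unset Printing Implicit Defensive.

Section S.
Variables (n D : nat) (A E : 'I_D.+1 -> 'M[algC]_n) (x : 'I_n).
Hypothesis hA : is_sym_assoc_scheme A.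
Hypothesis hE : is_prim_idems A E.

Local Notation BM := (in_BM A).

Lemma BM0 : BM 0.
Proof. by exists (fun _ => 0); rewrite big1 // => k _; rewrite scale0r. Qed.

Lemma BMD M N : BM M -> BM N -> BM (M + N).
Proof.
move=> [c ->] [d ->]; exists (fun k => c k + d k).
by rewrite -big_split /=; apply: eq_bigr => k _; rewrite scalerDl.
Qed.

Lemma BMZ a M : BM M -> BM (a *: M).
Proof.
move=> [c ->]; exists (fun k => a * c k).
by rewrite scaler_sumr; apply: eq_bigr => k _; rewrite scalerA.
Qed.

Lemma BM_sum (I : finType) (P : pred I) (F : I -> 'M_n) :
  (forall i, P i -> BM (F i)) -> BM (\sum_(i | P i) F i).
Proof.
move=> H; apply: (big_ind BM) => //; [exact: BM0 | exact: BMD].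
Qed.

Lemma BMA i : BM (A i).
Proof.
exists (fun k => (k == i)%:R); rewrite (bigD1 i) //= eqxx scale1r big1 ?addr0 //.
by move=> k /negbTE ->; rewrite scale0r.
Qed.

Lemma BMM M N : BM M -> BM N -> BM (M *m N).
Proof.
move=> [c ->] [d ->]; rewrite mulmx_suml; apply: BM_sum => k _.
rewrite mulmx_sumr; apply: BM_sum => l _.
rewrite -scalemxAl -scalemxAr; apply: BMZ; apply: BMZ.
have [_ _ _ _ h] := hA; have [e ->] := h k l; by exists e.
Qed.

Lemma A_sym i : (A i)^T = A i.
Proof. by have [_ _ _ h _] := hA. Qed.

Lemma BM_sym M : BM M -> M^T = M.
Proof.
move=> [c ->]; rewrite raddf_sum; apply: eq_bigr => k _.
by apply/matrixP=> a b; rewrite !mxE -[in RHS](A_sym k) mxE.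
Qed.

Lemma BM_comm M N : BM M -> BM N -> M *m N = N *m M.
Proof.
move=> hM hN; rewrite -(BM_sym (BMM hM hN)) trmx_mul.
by rewrite (BM_sym hM) (BM_sym hN).
Qed.

Lemma E_BM i : BM (E i). Proof. by have [_ h _ _ _] := hE. Qed.
Lemma E_mul i j : E i *m E j = if i == j then E i else 0.
Proof. by have [_ _ h _ _] := hE. Qed.
Lemma E_sum : \sum_(i < D.+1) E i = 1%:M.
Proof. by have [_ _ _ h _] := hE. Qed.
Lemma E_neq0 i : E i != 0. Proof. by have [_ _ _ _ h] := hE. Qed.
Lemma E_idem i : E i *m E i = E i. Proof. by rewrite E_mul eqxx. Qed.
Lemma E_orth i j : i != j -> E i *m E j = 0.
Proof. by rewrite E_mul => /negbTE ->. Qed.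
Lemma E_sym i : (E i)^T = E i. Proof. exact: BM_sym (E_BM i). Qed.

Lemma E_mul_sum i (c : 'I_D.+1 -> algC) :
  E i *m (\sum_k c k *: E k) = c i *: E i.
Proof.
rewrite mulmx_sumr (bigD1 i) //= -scalemxAr E_idem big1 ?addr0 //.
by move=> k ki; rewrite -scalemxAr E_orth ?scaler0 // eq_sym.
Qed.

(* E's span BM *)
Definition BAmx : 'M[algC]_(D.+1, n * n) := \matrix_(k < D.+1) mxvec (A k).
Definition BEmx : 'M[algC]_(D.+1, n * n) := \matrix_(k < D.+1) mxvec (E k).

Lemma BM_sub M : BM M -> (mxvec M <= BAmx)%MS.
Proof.
move=> [c ->]; rewrite linear_sum /=; apply: summx_sub => k _.
rewrite linearZ /=; apply: scalemx_sub.
by apply: (eq_row_sub k); rewrite rowK.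
Qed.

Lemma BEfree : row_free BEmx.
Proof.
apply: inj_row_free; move=> v hv.
have h0 : \sum_k v 0 k *: E k = 0.
  apply: (can_inj mxvecK); rewrite linear_sum /= linear0 -[RHS]hv mulmx_sum_row.
  by apply: eq_bigr => k _; rewrite rowK linearZ.
apply/rowP => k; rewrite mxE; apply/eqP.
have := E_mul_sum k (fun k => v 0 k); rewrite h0 mulmx0 => /esym/eqP.
by rewrite scalemx_eq0 (negbTE (E_neq0 k)) orbF.
Qed.

Lemma BA_sub_BE : (BAmx <= BEmx)%MS.
Proof.
have sEA : (BEmx <= BAmx)%MS.
  by apply/row_subP => k; rewrite rowK; apply: BM_sub; exact: E_BM.
have h := mxrank_leqif_sup sEA; rewrite -(h.2) eqn_leq h.1 /=.
by rewrite (eqnP BEfree); exact: rank_leq_row.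
Qed.

Lemma BM_E M : BM M -> exists c : 'I_D.+1 -> algC, M = \sum_k c k *: E k.
Proof.
move=> hM; have := submx_trans (BM_sub hM) BA_sub_BE.
move=> /submxP [d hd]; exists (fun k => d 0 k).
apply: (can_inj mxvecK); rewrite hd mulmx_sum_row linear_sum /=.
by apply: eq_bigr => k _; rewrite linearZ /= rowK.
Qed.

Lemma BM_mul_E M i : BM M -> exists c, M *m E i = c *: E i.
Proof.
move=> /BM_E [c ->]; exists (c i).
by rewrite (BM_comm _ (E_BM i)) ?E_mul_sum //; apply: BM_sum => k _; apply: BMZ; exact: E_BM.
Qed.


Lemma sumsq_eq0 p q (M : 'M[algC]_(p, q)) :
  \sum_(y < p) \sum_(z < q) `|M y z| ^+ 2 = 0 -> M = 0.
Proof.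
move=> h; apply/matrixP => y z; rewrite mxE.
have h1 := psumr_eq0P (fun y _ => sumr_ge0 _ (fun z _ => exprn_ge0 2 (normr_ge0 (M y z)))) h (isT : true).
have h2 := psumr_eq0P (fun z _ => exprn_ge0 2 (normr_ge0 (M y z))) (h1 y) (isT : true).
by move/eqP: (h2 z); rewrite expf_eq0 /= normr_eq0 => /eqP.
Qed.

Lemma A_01 i y z : A i y z = 0 \/ A i y z = 1.
Proof. by have [_ _ [h _] _ _] := hA. Qed.

Lemma A_real i : map_mx Num.conj (A i) = A i.
Proof.
apply/matrixP => y z; rewrite mxE.
by case: (A_01 i y z) => ->; rewrite ?rmorph0 ?rmorph1.
Qed.

Lemma BM_conj M : BM M -> BM (map_mx Num.conj M).
Proof.
move=> [c ->]; exists (fun k => (c k)^*).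
apply/matrixP => y z; rewrite mxE !summxE rmorph_sum; apply: eq_bigr => k _.
by rewrite !mxE rmorphM /= -[in RHS](A_real k) mxE.
Qed.

Lemma E_real i : map_mx Num.conj (E i) = E i.
Proof.
set F := map_mx Num.conj (E i).
have hF : BM F by apply: BM_conj; exact: E_BM.
have FF : F *m F = F by rewrite -map_mxM E_idem.
have EF : E i *m F = F *m E i by apply: BM_comm => //; exact: E_BM.
have hG : BM (E i *m F) by apply: BMM => //; exact: E_BM.
have [c hc] := BM_E hG.
have Gc : E i *m F = c i *: E i.
  by rewrite -E_mul_sum -hc mulmxA E_idem.
have cc : c i * c i = c i.
  have : (E i *m F) *m (E i *m F) = E i *m F.
    by rewrite mulmxA -(mulmxA (E i) F) -EF mulmxA E_idem -mulmxA FF.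
  rewrite Gc -scalemxAl -scalemxAr E_idem scalerA => /eqP.
  rewrite -subr_eq0 -scalerBl scalemx_eq0 (negbTE (E_neq0 i)) orbF subr_eq0.
  by move/eqP.
have c0 : c i != 0.
  apply/eqP => c0; move: (E_neq0 i); rewrite (sumsq_eq0 (M := E i)) ?eqxx //.
  have : \tr (E i *m F) = 0 by rewrite Gc c0 scale0r mxtrace0.
  move=> h0; rewrite -[RHS]h0 /mxtrace; apply: eq_bigr => y _; rewrite mxE.
  apply: eq_bigr => z _; rewrite mxE normCK.
  by congr (_ * _^*); rewrite -{1}(E_sym i) mxE.
have c1 : c i = 1.
  by apply: (mulfI c0); rewrite mulr1.
have G1 : E i *m F = E i by rewrite Gc c1 scale1r.
have : map_mx Num.conj (E i *m F) = F.
  by rewrite G1.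
rewrite map_mxM (_ : map_mx Num.conj F = E i) -?EF ?G1 //.
by apply/matrixP => y z; rewrite !mxE conjCK.
Qed.

(* Terwilliger algebra membership *)
Local Notation T := (inT A E x).

Lemma inT0 : T 0.
Proof. by rewrite -(scale0r (1%:M : 'M[algC]_n)); apply: inT_scale; exact: inT_1. Qed.

Lemma inT_sum (I : finType) (P : pred I) (F : I -> 'M_n) :
  (forall i, P i -> T (F i)) -> T (\sum_(i | P i) F i).
Proof. by move=> H; apply: (big_ind T) => //; [exact: inT0 | exact: inT_add]. Qed.

Lemma BM_T M : BM M -> T M.
Proof.
move=> [c ->]; apply: inT_sum => k _; apply: inT_scale; exact: inT_A.
Qed.

Lemma E_T i : T (E i). Proof. exact: BM_T (E_BM i). Qed.

Lemma n_gt0 : (0 < n)%N.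
Proof.
case: n A hA => [|m] A' hA' //; have [_ _ [_ h] _ _] := hA'.
by have := h ord0; rewrite (flatmx0 (A' ord0)) eqxx.
Qed.

Lemma n_neq0 : (n%:R : algC) != 0.
Proof. by rewrite pnatr_eq0 -lt0n n_gt0. Qed.

Lemma Estar_T i : T (Estar A x i).
Proof.
have [a ha] := BM_E (BMA i).
have -> : Estar A x i = \sum_j (a j / n%:R) *: Astar E x j.
  apply/matrixP => y z; rewrite /Estar ha summxE !mxE summxE.
  case: (eqVneq y z) => [<-|yz].
    rewrite mulr1n; apply: eq_bigr => j _; rewrite !mxE eqxx mulr1n.
    by rewrite mulrA divfK ?n_neq0.
  rewrite mulr0n big1 // => j _; rewrite !mxE (negbTE yz) mulr0n mulr0 //.
by apply: inT_sum => j _; apply: inT_scale; exact: inT_Astar.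
Qed.

Definition adj (M : 'M[algC]_n) := (map_mx Num.conj M)^T.

Lemma adj_T F : T F -> T (adj F).
Proof.
elim=> {F}.
- by move=> i; rewrite /adj A_real A_sym; exact: inT_A.
- move=> i; rewrite /adj /Astar.
  have -> : map_mx Num.conj (diag_mx (n%:R *: row x (E i))) = diag_mx (n%:R *: row x (E i)).
    apply/matrixP => y z; rewrite !mxE rmorphMn rmorphM rmorph_nat.
    by rewrite -[in RHS](E_real i) !mxE.
  by rewrite tr_diag_mx; exact: inT_Astar.
- by rewrite /adj map_mx1 trmx1; exact: inT_1.
- by move=> F G _ hF _ hG; rewrite /adj map_mxD linearD /=; exact: inT_add.
- by move=> c F _ hF; rewrite /adj map_mxZ linearZ /=; exact: inT_scale.
- by move=> F G _ hF _ hG; rewrite /adj map_mxM trmx_mul; exact: inT_mul.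
Qed.


Hypothesis hC : is_cometric E.

Definition mpow (M : 'M[algC]_n) k : 'M[algC]_n := iter k (fun N : 'M[algC]_n => M *m N) 1%:M.


Definition i1 : 'I_D.+1 := inord 1.

Lemma diag_row_hmul (M N : 'M[algC]_n) y :
  diag_mx (row y (hmul M N)) = diag_mx (row y M) *m diag_mx (row y N).
Proof.
apply/matrixP => a b; rewrite mul_diag_mx !mxE.
by case: (a == b); rewrite ?mulr1n ?mulr0n ?mulr0.
Qed.

Lemma diag_row_hpow (M : 'M[algC]_n) y k :
  diag_mx (row y (hpow M k)) = mpow (diag_mx (row y M)) k.
Proof.
elim: k => [|k IH].
  apply/matrixP => a b; rewrite /= !mxE.
  by case: (a == b); rewrite ?mulr1n ?mulr0n.
by rewrite /hpow iterS -/(hpow M k) diag_row_hmul IH.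
Qed.

Lemma Astar_poly y i : exists (q : nat -> algC) m,
  Astar E y i = \sum_(k < m) q k *: mpow (Astar E y i1) k.
Proof.
have [p [_ hp]] := hC i.
have nN := n_neq0.
exists (fun k => n%:R * p`_k / n%:R ^+ k), (size p).
have hB : Astar E y i1 = n%:R *: diag_mx (row y (E (inord 1))).
  by rewrite /Astar linearZ.
have hmp k : mpow (Astar E y i1) k = n%:R ^+ k *: mpow (diag_mx (row y (E (inord 1)))) k.
  elim: k => [|k IH]; first by rewrite expr0 scale1r.
  by rewrite /mpow !iterS -!/(mpow _ k) IH hB -scalemxAl -scalemxAr scalerA exprS.
rewrite /Astar hp linearZ linear_sum /= linear_sum /= scaler_sumr.
apply: eq_bigr => k _; rewrite hmp scalerA linearZ /= linearZ /= diag_row_hpow.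
by rewrite scalerA divfK ?expf_neq0.
Qed.

Lemma mpow_inW (W : 'M[algC]_n) M k v :
  (forall v, inW W v -> inW W (M *m v)) -> inW W v -> inW W (mpow M k *m v).
Proof.
move=> hM; elim: k v => [|k IH] v hv; first by rewrite /= mul1mx.
by rewrite /mpow iterS -/(mpow M k) -mulmxA; apply: hM; apply: IH.
Qed.

Lemma inW_add (W : 'M[algC]_n) u v : inW W u -> inW W v -> inW W (u + v).
Proof. by rewrite /inW linearD /=; exact: addmx_sub. Qed.
Lemma inW_scale (W : 'M[algC]_n) c v : inW W v -> inW W (c *: v).
Proof. by rewrite /inW linearZ /=; exact: scalemx_sub. Qed.
Lemma inW0 (W : 'M[algC]_n) : inW W 0.
Proof. by rewrite /inW linear0 sub0mx. Qed.
Lemma inW_sum (W : 'M[algC]_n) (I : finType) (P : pred I) (F : I -> 'cV_n) :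
  (forall i, P i -> inW W (F i)) -> inW W (\sum_(i | P i) F i).
Proof. by move=> H; apply: (big_ind (inW W)) => //; [exact: inW0 | exact: inW_add]. Qed.

Lemma Tgen (W : 'M[algC]_n) :
  (forall i v, inW W v -> inW W (A i *m v)) ->
  (forall v, inW W v -> inW W (Astar E x i1 *m v)) -> is_Tmodule A E x W.
Proof.
move=> hAi hB F; elim=> {F}.
- by move=> i v; apply: hAi.
- move=> i v hv; have [q [m ->]] := Astar_poly x i.
  rewrite mulmx_suml; apply: inW_sum => k _; rewrite -scalemxAl.
  by apply: inW_scale; apply: mpow_inW.
- by move=> v; rewrite mul1mx.
- by move=> F G _ hF _ hG v hv; rewrite mulmxDl; apply: inW_add; [apply: hF | apply: hG].
- by move=> c F _ hF v hv; rewrite -scalemxAl; apply: inW_scale; apply: hF.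
- by move=> F G _ hF _ hG v hv; rewrite -mulmxA; apply: hF; apply: hG.
Qed.


Definition spanE k (M : 'M[algC]_n) :=
  exists c : 'I_D.+1 -> algC, M = \sum_(j < D.+1 | (j <= k)%N) c j *: E j.

Lemma spanE0 k : spanE k 0.
Proof. by exists (fun _ => 0); rewrite big1 // => j _; rewrite scale0r. Qed.

Lemma spanED k M N : spanE k M -> spanE k N -> spanE k (M + N).
Proof.
move=> [c ->] [d ->]; exists (fun j => c j + d j).
by rewrite -big_split /=; apply: eq_bigr => j _; rewrite scalerDl.
Qed.

Lemma spanEZ k a M : spanE k M -> spanE k (a *: M).
Proof.
move=> [c ->]; exists (fun j => a * c j).
by rewrite scaler_sumr; apply: eq_bigr => j _; rewrite scalerA.
Qed.

Lemma spanE_sum k (I : finType) (P : pred I) (F : I -> 'M_n) :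
  (forall i, P i -> spanE k (F i)) -> spanE k (\sum_(i | P i) F i).
Proof. by move=> H; apply: (big_ind (spanE k)) => //; [exact: spanE0 | exact: spanED]. Qed.

Lemma spanE_mono k k' M : (k <= k')%N -> spanE k M -> spanE k' M.
Proof.
move=> kk [c ->]; exists (fun j : 'I_D.+1 => if (j <= k)%N then c j else 0).
rewrite big_mkcond [RHS]big_mkcond; apply: eq_bigr => j _.
case jk: (j <= k)%N; first by rewrite (leq_trans jk kk).
by case: ifP; rewrite ?scale0r.
Qed.

Lemma spanE_E k (j : 'I_D.+1) : (j <= k)%N -> spanE k (E j).
Proof.
move=> jk; exists (fun i => (i == j)%:R).
rewrite (bigD1 j) //= eqxx scale1r big1 ?addr0 //.
by move=> i /andP [_ /negbTE ->]; rewrite scale0r.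
Qed.

Lemma hpow_span k : (k <= D)%N -> spanE k (hpow (E i1) k).
Proof.
elim/ltn_ind: k => k IH kD.
have [p [hs hp]] := hC (inord k).
rewrite inordK ?ltnS // in hs.
have pk : p`_k != 0.
  have : lead_coef p != 0 by rewrite lead_coef_eq0 -size_poly_gt0 hs.
  by rewrite lead_coefE hs.
move: hp; rewrite hs big_ord_recr /= => hp.
have -> : hpow (E i1) k = (p`_k)^-1 *: (E (inord k) - \sum_(l < k) p`_l *: hpow (E i1) l).
  by rewrite hp [_ + p`_k *: _]addrC addrK scalerA mulVf ?scale1r.
apply: spanEZ; apply: spanED.
  by apply: spanE_E; rewrite inordK ?ltnS.
rewrite -scaleN1r; apply: spanEZ; apply: spanE_sum => l _; apply: spanEZ.
apply: (spanE_mono (ltnW (ltn_ord l))); apply: IH => //.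
exact: leq_trans (ltnW (ltn_ord l)) kD.
Qed.

Lemma hmul_sumr (M : 'M[algC]_n) (I : finType) (F : I -> 'M_n) (c : I -> algC) :
  hmul M (\sum_i c i *: F i) = \sum_i c i *: hmul M (F i).
Proof.
apply/matrixP => a b; rewrite /hmul !mxE !summxE mulr_sumr.
by apply: eq_bigr => i _; rewrite !mxE mulrCA.
Qed.

Lemma hmul_span h : (h.+1 <= D)%N -> spanE h.+1 (hmul (E i1) (E (inord h))).
Proof.
move=> hD; have [p [hs hp]] := hC (inord h).
rewrite inordK ?ltnS ?(ltnW hD) // in hs.
rewrite hp hmul_sumr; apply: spanE_sum => l _; apply: spanEZ.
have -> : hmul (E i1) (hpow (E i1) l) = hpow (E i1) l.+1 by [].
have lh : (l.+1 <= h.+1)%N by rewrite -hs (ltn_ord l).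
apply: (spanE_mono lh); apply: hpow_span.
exact: leq_trans lh hD.
Qed.

Lemma E_adj j : adj (E j) = E j.
Proof. by rewrite /adj E_real E_sym. Qed.

Lemma Astar_adj y j : adj (Astar E y j) = Astar E y j.
Proof.
rewrite /adj /Astar.
have -> : map_mx Num.conj (diag_mx (n%:R *: row y (E j))) = diag_mx (n%:R *: row y (E j)).
  apply/matrixP => a b; rewrite !mxE rmorphMn rmorphM rmorph_nat.
  by rewrite -[in RHS](E_real j) !mxE.
by rewrite tr_diag_mx.
Qed.

Lemma adjM (M N : 'M[algC]_n) : adj (M *m N) = adj N *m adj M.
Proof. by rewrite /adj map_mxM trmx_mul. Qed.

Lemma tr_adj (M : 'M[algC]_n) :
  \tr (M *m adj M) = \sum_(y < n) \sum_(z < n) `|M y z| ^+ 2.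
Proof.
apply: eq_bigr => y _; rewrite mxE; apply: eq_bigr => z _.
by rewrite !mxE normCK.
Qed.

Lemma tri_low0 (l h : 'I_D.+1) (y : 'I_n) : (h.+1 < l)%N -> E l *m Astar E y i1 *m E h = 0.
Proof.
move=> hl.
pose M y := E l *m Astar E y i1 *m E h.
have hD : (h.+1 <= D)%N by have := ltn_ord l; lia.
have key : \sum_(y < n) \tr (M y *m adj (M y)) = 0.
  have h1 y' : \tr (M y' *m adj (M y')) =
      \sum_(w < n) \sum_(v < n) (n%:R * E i1 y' w) * E h w v * (n%:R * E i1 y' v) * E l v w.
    set Dy := Astar E y' i1.
    have -> : M y' *m adj (M y') = E l *m ((Dy *m E h *m Dy) *m E l).
      rewrite /M !adjM !E_adj Astar_adj !mulmxA -(mulmxA (E l *m Dy) (E h) (E h)) E_idem.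
      by rewrite -/Dy.
    rewrite mxtrace_mulC -(mulmxA _ (E l) (E l)) E_idem.
    apply: eq_bigr => w _; rewrite mxE; apply: eq_bigr => v _.
    rewrite /Dy /Astar mul_mx_diag mul_diag_mx !mxE.
    by [].
  rewrite (eq_bigr _ (fun y' _ => h1 y')) exchange_big /=.
  have h2 : forall w v : 'I_n, \sum_(y' < n) (n%:R * E i1 y' w) * E h w v * (n%:R * E i1 y' v) * E l v w
      = n%:R ^+ 2 * (E l v w * (E i1 w v * E (inord h) w v)).
    move=> w v.
    have e1 : \sum_(y' < n) E i1 y' w * E i1 y' v = E i1 w v.
      rewrite -[in RHS](E_idem i1) mxE; apply: eq_bigr => y' _.
      by rewrite -{1}(E_sym i1) mxE.
    have -> : (inord h : 'I_D.+1) = h by apply: val_inj; rewrite /= inordK // ltnS ltnW.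
    rewrite -e1 mulr_suml !mulr_sumr; apply: eq_bigr => y' _; ring.
  rewrite (eq_bigr _ (fun w _ => exchange_big _ _ _ _ _ _)).
  rewrite (eq_bigr _ (fun w _ => eq_bigr _ (fun v _ => h2 w v))) /=.
  have [c hc] := hmul_span hD.
  have : \tr (E l *m hmul (E i1) (E (inord h))) = 0.
    rewrite hc mulmx_sumr big1 ?mxtrace0 // => j jh.
    rewrite -scalemxAr E_orth ?scaler0 //; apply/eqP => lj; move: jh hl; rewrite -lj; lia.
  rewrite /mxtrace => h3; rewrite -[RHS](mulr0 (n%:R ^+ 2)) -[in RHS]h3 mulr_sumr.
  rewrite exchange_big; apply: eq_bigr => v _; rewrite mxE mulr_sumr; apply: eq_bigr => w _.
  by rewrite /hmul mxE.
have ge0 y' : 0 <= \tr (M y' *m adj (M y')).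
  by rewrite tr_adj; apply: sumr_ge0 => a _; apply: sumr_ge0 => b _; apply: exprn_ge0.
have := psumr_eq0P (fun y' _ => ge0 y') key (isT : true) (i := y).
by rewrite tr_adj => /sumsq_eq0.
Qed.

Lemma tri_low (l h : 'I_D.+1) (y : 'I_n) : (l.+1 < h)%N -> E l *m Astar E y i1 *m E h = 0.
Proof.
move=> hl; apply: trmx_inj; rewrite trmx0 !trmx_mul !E_sym /Astar tr_diag_mx mulmxA.
exact: tri_low0.
Qed.


(* ---------- dual idempotents ---------- *)
Lemma A_sumE y z : \sum_i A i y z = 1.
Proof.
have [_ h _ _ _] := hA; have := congr1 (fun M : 'M[algC]_n => M y z) h.
by rewrite /= summxE mxE.
Qed.

Lemma A_ge0 i y z : 0 <= A i y z.
Proof. by case: (A_01 i y z) => ->. Qed.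

Lemma A_disj i k y z : i != k -> A i y z * A k y z = 0.
Proof.
move=> ik; case: (A_01 i y z) => hi; first by rewrite hi mul0r.
case: (A_01 k y z) => hk; first by rewrite hk mulr0.
exfalso; move: (A_sumE y z); rewrite (bigD1 i) //= (bigD1 k) 1?eq_sym //= hi hk => h.
set S := \sum_(j | _) _ in h.
have S0 : 0 <= S by apply: sumr_ge0 => j _; exact: A_ge0.
have e : S = (1 + (1 + S)) - 1 - 1 by ring.
rewrite h in e; move: S0; rewrite e subrr sub0r oppr_ge0 ler10 //.
Qed.

Lemma Estar_sum : \sum_i Estar A x i = 1%:M.
Proof.
apply/matrixP => y z; rewrite summxE !mxE.
under eq_bigr do rewrite mxE.
by rewrite sumrMnl; under eq_bigr do rewrite mxE; rewrite A_sumE.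
Qed.

Lemma B_Estar : exists th : 'I_D.+1 -> algC,
  forall i, Astar E x i1 *m Estar A x i = th i *: Estar A x i.
Proof.
have [c hc] := E_BM i1; exists (fun i => n%:R * c i) => i.
apply/matrixP => y z; rewrite /Astar /Estar mul_diag_mx !mxE.
rewrite hc summxE.
case: (eqVneq y z) => [_|_]; last by rewrite !mulr0n !mulr0.
rewrite !mulr1n -!mulrA; congr (_ * _).
rewrite mulr_suml (bigD1 i) //= big1 ?addr0.
  rewrite mxE -mulrA; congr (_ * _).
  by case: (A_01 i x y) => ->; rewrite ?mulr0 ?mulr1.
by move=> k ki; rewrite mxE -mulrA (A_disj _ _ ki) mulr0.
Qed.

(* ---------- inner products and orthogonal complements ---------- *)
Definition dot (u v : 'cV[algC]_n) : algC := (u^T *m map_mx Num.conj v) 0 0.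
Definition orth (W : 'M[algC]_n) : 'M[algC]_n := kermx (map_mx Num.conj W)^T.

Lemma dot_conj u v : dot v u = (dot u v)^*.
Proof.
rewrite /dot !mxE rmorph_sum; apply: eq_bigr => j _.
by rewrite !mxE rmorphM /= conjCK mulrC.
Qed.

Lemma dot_self v : dot v v = 0 -> v = 0.
Proof.
move=> h; apply: sumsq_eq0; rewrite -[RHS]h /dot mxE; apply: eq_bigr => y _.
by rewrite big_ord1 !mxE normCK (ord1 (0 : 'I_1)).
Qed.

Lemma dot_adj (F : 'M[algC]_n) v w : dot (F *m v) w = dot v (adj F *m w).
Proof.
rewrite /dot /adj trmx_mul map_mxM.
have -> : map_mx Num.conj (map_mx Num.conj F)^T = F^T.
  by apply/matrixP => a b; rewrite !mxE conjCK.
by rewrite !mulmxA.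
Qed.

Lemma conjT p q (M : 'M[algC]_(p, q)) : map_mx Num.conj M^T = (map_mx Num.conj M)^T.
Proof. by apply/matrixP => a b; rewrite !mxE. Qed.

Lemma orthP (W : 'M[algC]_n) v : reflect (forall w, inW W w -> dot v w = 0) (inW (orth W) v).
Proof.
rewrite /inW /orth sub_kermx; apply: (iffP eqP) => [h w /submxP [a ha] | h].
  rewrite /dot -[w]trmxK ha conjT map_mxM trmx_mul mulmxA.
  by rewrite h mul0mx mxE.
apply/rowP => i; rewrite !mxE.
have := h (row i W)^T; rewrite /inW trmxK row_sub => /(_ isT).
move=> h0; rewrite -[RHS]h0 /dot mxE; apply: eq_bigr => j _; rewrite !mxE.
by [].
Qed.

Lemma orth_inter (W : 'M[algC]_n) v : inW W v -> inW (orth W) v -> v = 0.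
Proof. by move=> hv /orthP h; apply: dot_self; apply: h. Qed.

Lemma orth_decomp (W : 'M[algC]_n) v : exists w w', [/\ inW W w, inW (orth W) w' & v = w + w'].
Proof.
have hcap : (W :&: orth W)%MS = 0.
  apply/row_matrixP => i; rewrite row0.
  have : (row i (W :&: orth W) <= W :&: orth W)%MS by exact: row_sub.
  rewrite sub_capmx => /andP [h1 h2].
  apply: trmx_inj; rewrite trmx0; apply: (orth_inter (W:=W)); rewrite /inW trmxK; [exact: h1 | exact: h2].
have hr : \rank (orth W) = (n - \rank W)%N.
  by rewrite /orth mxrank_ker mxrank_tr mxrank_map.
have hfull : row_full (W + orth W)%MS.
  rewrite /row_full (mxrank_disjoint_sum hcap) hr subnKC //; exact: rank_leq_col.
have : (v^T <= W + orth W)%MS by apply: submx_full.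
move=> /sub_addsmxP [[a b] /= hab].
exists (a *m W)^T, (b *m orth W)^T; split.
- by rewrite /inW trmxK submxMl.
- by rewrite /inW trmxK submxMl.
- by rewrite -linearD /= -hab trmxK.
Qed.

Lemma orth_T (W : 'M[algC]_n) : is_Tmodule A E x W -> is_Tmodule A E x (orth W).
Proof.
move=> hW F hF v /orthP hv; apply/orthP => w hw.
by rewrite dot_adj; apply: hv; apply: (hW) => //; exact: adj_T.
Qed.

Lemma cap_T (U W : 'M[algC]_n) : is_Tmodule A E x U -> is_Tmodule A E x W ->
  is_Tmodule A E x (U :&: W)%MS.
Proof.
move=> hU hW F hF v; rewrite /inW !sub_capmx => /andP [h1 h2].
by apply/andP; split; [apply: hU | apply: (hW)].
Qed.

Lemma orth_orth (W : 'M[algC]_n) p : inW W p -> inW (orth (orth W)) p.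
Proof.
move=> hp; apply/orthP => z /orthP hz.
by rewrite dot_conj hz // rmorph0.
Qed.

Lemma inW_cap (U W : 'M[algC]_n) v : inW (U :&: W)%MS v = inW U v && inW W v.
Proof. by rewrite /inW sub_capmx. Qed.

(* ---------- images ---------- *)
Lemma imWP (F W : 'M[algC]_n) v : reflect (exists2 w, inW W w & v = F *m w) (inW (imW F W) v).
Proof.
rewrite /inW /imW; apply: (iffP idP) => [/submxP [a ha] | [w /submxP [a ha] ->]].
  exists (a *m W)^T; first by rewrite /inW trmxK submxMl.
  by apply: trmx_inj; rewrite ha trmx_mul trmxK mulmxA.
by rewrite trmx_mul ha -mulmxA submxMl.
Qed.

Lemma imW0P (F W : 'M[algC]_n) : reflect (forall w, inW W w -> F *m w = 0) (imW F W == 0).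
Proof.
apply: (iffP eqP) => [h w hw | h].
  have : inW (imW F W) (F *m w) by apply/imWP; exists w.
  by rewrite h /inW submx0 => /eqP /(congr1 trmx); rewrite trmxK trmx0.
apply/row_matrixP => i; rewrite row0 /imW row_mul.
have := h (row i W)^T; rewrite /inW trmxK row_sub => /(_ isT) /(congr1 trmx).
by rewrite trmx_mul trmxK trmx0.
Qed.

Lemma imW_sub (F W : 'M[algC]_n) : is_Tmodule A E x W -> inT A E x F -> (imW F W <= W)%MS.
Proof.
move=> hW hF; apply/row_subP => i; rewrite /imW row_mul.
have := hW F hF (row i W)^T; rewrite /inW trmxK row_sub => /(_ isT).
by rewrite trmx_mul trmxK.
Qed.

Lemma rank1_dep (M : 'M[algC]_n) u v : (\rank M <= 1)%N -> inW M u -> inW M v -> u != 0 ->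
  exists c, v = c *: u.
Proof.
move=> hr hu hv u0.
have ru : \rank u^T = 1%N.
  apply/eqP; rewrite eqn_leq rank_leq_row lt0n mxrank_eq0.
  by apply: contraNneq u0 => h; rewrite -[u]trmxK h trmx0.
have hMu : (M <= u^T)%MS.
  have h := mxrank_leqif_sup hu; rewrite -(h.2) eqn_leq h.1 /=.
  by rewrite ru.
have := submx_trans hv hMu => /submxP [a ha].
exists (a 0 0); apply: trmx_inj; rewrite ha linearZ /=.
by apply/rowP => j; rewrite !mxE big_ord1 !mxE (ord1 (0 : 'I_1)).
Qed.

(* ---------- dual endpoint ---------- *)
Lemma rstar_le (W : 'M[algC]_n) (j : 'I_D.+1) : imW (E j) W != 0 -> (rstar E W <= j)%N.
Proof.
move=> hj; rewrite /rstar.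
have : j \in index_enum 'I_D.+1 by rewrite mem_index_enum.
elim: (index_enum 'I_D.+1) => // i r IH; rewrite inE big_cons.
case/orP => [/eqP <-|jr]; first by rewrite hj geq_minl.
case: ifP => _; last exact: IH.
exact: leq_trans (geq_minr _ _) (IH jr).
Qed.

Lemma rstar_att (W : 'M[algC]_n) : W != 0 -> exists j : 'I_D.+1, j = rstar E W :> nat /\ imW (E j) W != 0.
Proof.
move=> W0.
have [j0 hj0] : exists j : 'I_D.+1, imW (E j) W != 0.
  apply/existsP; apply: contraNT W0; rewrite negb_exists => /forallP h.
  apply/eqP; rewrite -[W]mulmx1 -[1%:M]trmx1 -E_sum raddf_sum mulmx_sumr /=.
  by rewrite big1 // => j _; apply/eqP; have := h j; rewrite negbK.
have : rstar E W = D.+1 \/ exists2 j : 'I_D.+1, imW (E j) W != 0 & rstar E W = j.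
  rewrite /rstar; apply: (big_ind (fun m => m = D.+1 \/ exists2 j : 'I_D.+1, imW (E j) W != 0 & m = j)).
  - by left.
  - move=> a b ha hb /=; case: (leqP a b) => ab.
      by [].
    by [].
  - by move=> j hj; right; exists j.
case=> [h|[j hj ->]]; last by exists j.
by have := rstar_le hj0; rewrite h ltnNge -ltnS ltn_ord.
Qed.


Local Notation B := (Astar E x i1).

Lemma imW_neq0 (F W : 'M[algC]_n) : imW F W != 0 -> exists2 w, inW W w & F *m w != 0.
Proof.
move=> h; case: (pickP (fun i => row i (imW F W) != 0)) => [i hi | h0].
  exists (row i W)^T; first by rewrite /inW trmxK row_sub.
  apply/eqP => e; move: hi; rewrite /imW row_mul.
  by rewrite -[row i W]trmxK -trmx_mul e trmx0 eqxx.
exfalso; move/negP: h; apply; apply/eqP/row_matrixP => i.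
by move/negbFE: (h0 i) => /eqP ->; rewrite row0.
Qed.

Definition Gk (k : nat) : 'M[algC]_n := \sum_(h < D.+1 | (k <= h)%N) E h.

Lemma Gk_BM k : BM (Gk k).
Proof. by apply: BM_sum => h _; exact: E_BM. Qed.

Lemma E_Gk k (j : 'I_D.+1) : E j *m Gk k = if (k <= j)%N then E j else 0.
Proof.
rewrite /Gk mulmx_sumr; case: ifP => kj.
  rewrite (bigD1 j) //= E_idem big1 ?addr0 // => h /andP [_ hj].
  by rewrite E_orth // eq_sym.
rewrite big1 // => h kh; rewrite E_orth //; apply: contraFneq kj => ->; exact: kh.
Qed.

Lemma Gk_compl k : Gk k + \sum_(h < D.+1 | ~~ (k <= h)%N) E h = 1%:M.
Proof. by rewrite /Gk -E_sum [RHS](bigID (fun h : 'I_D.+1 => (k <= h)%N)). Qed.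

Lemma lower_contra (W : 'M[algC]_n) (k' k : 'I_D.+1) :
  irreducible_Tmodule A E x W -> k = k'.+1 :> nat -> (rstar E W < k)%N ->
  (exists2 w0, inW W w0 & E k *m w0 != 0) ->
  ~ (forall w, inW W w -> E k' *m (B *m (E k *m w)) = 0).
Proof.
move=> [hW W0 hirr] hk hr [w0 hw0 hEw0] hlow.
set G := Gk k; set U := imW G W.
have hGT : inT A E x G by apply: BM_T; exact: Gk_BM.
have hU : is_Tmodule A E x U.
  apply: Tgen => [i v /imWP [w hw ->] | v /imWP [w hw ->]].
    apply/imWP; exists (A i *m w); first by apply: (hW) => //; exact: inT_A.
    by rewrite !mulmxA (BM_comm (BMA i) (Gk_BM k)).
  apply/imWP; exists (B *m (G *m w)).
    by apply: (hW); [exact: inT_Astar | apply: (hW)].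
  rewrite -{1}(mul1mx (B *m (G *m w))) -(Gk_compl k) mulmxDl -/G.
  rewrite [X in _ + X](_ : _ = 0) ?addr0 //.
  rewrite mulmx_suml big1 // => l hl.
  rewrite /G /Gk mulmx_suml !mulmx_sumr big1 // => h hh.
  have [lh|hl'] := ltnP l.+1 h.
    by rewrite !mulmxA (tri_low x lh) !mul0mx.
  have el : l = k' by apply: val_inj; move: hl hh hl'; rewrite /= hk; lia.
  have eh : h = k by apply: val_inj; move: hl hh hl'; rewrite /= hk; lia.
  by rewrite el eh; apply: hlow.
have UW : (U <= W)%MS by apply: imW_sub.
have U0' : U != 0.
  apply/negP => /imW0P h; have := h w0 hw0.
  move=> e; move: hEw0.
  have -> : E k *m w0 = E k *m (G *m w0) by rewrite mulmxA /G E_Gk leqnn.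
  by rewrite e mulmx0 eqxx.
have [j [hj hjW]] := rstar_att W0.
have [w hw hEw] := imW_neq0 hjW.
case: (hirr U hU UW) => [/eqP e | eUW]; first by move: U0'; rewrite e eqxx.
have : inW U w by rewrite /inW (submx_trans hw) //; case/andP: eUW.
move=> /imWP [w' hw' ew]; move: hEw; rewrite ew mulmxA E_Gk.
by rewrite leqNgt hj hr /= mul0mx eqxx.
Qed.


Lemma bigminn_le (P : pred 'I_D.+1) c (j : 'I_D.+1) :
  P j -> (\big[minn/c]_(i | P i) (i : nat) <= j)%N.
Proof.
move=> hj.
have : j \in index_enum 'I_D.+1 by rewrite mem_index_enum.
elim: (index_enum 'I_D.+1) => // i r IH; rewrite inE big_cons.
case/orP => [/eqP <-|jr]; first by rewrite hj geq_minl.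
case: ifP => _; last exact: IH.
exact: leq_trans (geq_minr _ _) (IH jr).
Qed.

Lemma mpowS M k : mpow M k.+1 = M *m mpow M k.
Proof. by []. Qed.

Lemma core (W : 'M[algC]_n) (chi u : 'cV[algC]_n) :
  irreducible_Tmodule A E x W -> (1 <= rstar E W)%N -> dual_thin E W ->
  (#|[set i in Wsupport A x W | Estar A x i *m chi != 0]|%:Z
     <= (deltastar E chi)%:Z - (rstar E W)%:Z)%R ->
  inW W u -> inW (orth W) (chi - u) -> u = 0.
Proof.
move=> hirr hr1 hthin hcnt hu hcu; have [hW W0 _] := hirr.
set r := rstar E W in hr1 hcnt *.
set I := [set i in Wsupport A x W | Estar A x i *m chi != 0] in hcnt *.
set ds := deltastar E chi in hcnt *.
have split0 F : inT A E x F -> F *m chi = 0 -> F *m u = 0.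
  move=> hF hFc; have h1 : inW W (F *m u) := hW F hF u hu.
  have h2 : inW (orth W) (F *m (chi - u)) := orth_T hW hF hcu.
  apply: (orth_inter h1).
  have -> : F *m u = (-1) *: (F *m (chi - u)) by rewrite mulmxBr hFc sub0r scaleN1r opprK.
  exact: inW_scale.
have cnt_le : (#|I| + r <= ds)%N by lia.
have Eh_low (h : 'I_D.+1) : (h < r)%N -> E h *m u = 0.
  move=> hh; case: (eqVneq (imW (E h) W) 0) => [/eqP/imW0P H | H]; first exact: H.
  by have := rstar_le H; rewrite leqNgt hh.
have Eh_ds (h : 'I_D.+1) : (0 < h)%N -> (h < ds)%N -> E h *m u = 0.
  move=> h0 hh; apply: split0; first exact: E_T.
  apply/eqP; apply: contraTT hh => H; rewrite -leqNgt /ds /deltastar.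
  by apply: bigminn_le; rewrite H andbT -lt0n.
have Est (i : 'I_D.+1) : i \notin I -> Estar A x i *m u = 0.
  rewrite inE negb_and => /orP [hs | hc].
    by move: hs; rewrite /Wsupport inE negbK => /imW0P; apply.
  by apply: split0; [exact: Estar_T | apply/eqP; rewrite -(negbK (_ == 0))].
have u_dec : u = \sum_(i in I) Estar A x i *m u.
  rewrite -{1}(mul1mx u) -Estar_sum mulmx_suml (bigID (fun i => i \in I)) /=.
  by rewrite [X in _ + X]big1 ?addr0 // => i hi; exact: Est i hi.
have [th hth] := B_Estar.
have Bpow (i : 'I_D.+1) k v : mpow B k *m (Estar A x i *m v) = (th i ^+ k) *: (Estar A x i *m v).
  elim: k => [|k IH]; first by rewrite mul1mx expr0 scale1r.
  by rewrite mpowS -mulmxA IH -scalemxAr mulmxA hth -scalemxAl scalerA exprSr.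
apply/eqP; apply: contraT => u0.
have exj : exists m, (m < D.+1)%N && (E (inord m) *m u != 0).
  case: (pickP (fun h : 'I_D.+1 => E h *m u != 0)) => [h0 hh0 | h0].
    by exists h0; rewrite ltn_ord inord_val.
  move: u0; rewrite -{1}(mul1mx u) -E_sum mulmx_suml big1 ?eqxx // => h _.
  by move/negbFE: (h0 h) => /eqP.
case: (ex_minnP exj) => j0 /andP [j0D hj0] minj0.
have ej0 : ((inord j0 : 'I_D.+1) : nat) = j0 by rewrite inordK.
have lowj0 (h : 'I_D.+1) : (h < j0)%N -> E h *m u = 0.
  move=> hh; apply/eqP; apply: contraTT hh => H; rewrite -leqNgt; apply: minj0.
  by rewrite ltn_ord inord_val.
have rj0 : (r <= j0)%N.
  rewrite leqNgt; apply/negP => H.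
  by move: hj0; rewrite (Eh_low (inord j0)) ?eqxx // ej0.
have j0pos : (0 < j0)%N.
  rewrite lt0n; apply/negP => /eqP e.
  by move: hj0; rewrite (Eh_low (inord j0)) ?eqxx // ej0 e.
have dsj0 : (ds <= j0)%N.
  rewrite leqNgt; apply/negP => H.
  by move: hj0; rewrite (Eh_ds (inord j0)) ?eqxx // ej0.
set m := #|I|.
have mle : (m <= j0 - r)%N by lia.
have chain : forall l, (l <= j0 - r)%N ->
   [/\ inW W (mpow B l *m u), E (inord (j0 - l)) *m (mpow B l *m u) != 0
     & forall h : 'I_D.+1, (h < j0 - l)%N -> E h *m (mpow B l *m u) = 0].
  elim => [|l IH] hl.
    by rewrite mul1mx subn0; split.
  have [hv hv0 hvlow] := IH (ltnW hl).
  set v := mpow B l *m u in hv hv0 hvlow *.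
  have -> : mpow B l.+1 *m u = B *m v by rewrite mpowS -mulmxA.
  have Ehv (h : 'I_D.+1) : E h *m (B *m v) = \sum_(h' < D.+1) E h *m B *m E h' *m v.
    by rewrite -{1}(mul1mx v) -E_sum mulmx_suml !mulmx_sumr; apply: eq_bigr => h' _; rewrite !mulmxA.
  have ek : ((inord (j0 - l) : 'I_D.+1) : nat) = (j0 - l)%N by rewrite inordK // ltnS; lia.
  have ek' : ((inord (j0 - l.+1) : 'I_D.+1) : nat) = (j0 - l.+1)%N by rewrite inordK // ltnS; lia.
  split.
  - by apply: (hW); [exact: inT_Astar | exact: hv].
  - set k := (inord (j0 - l) : 'I_D.+1); set k' := (inord (j0 - l.+1) : 'I_D.+1).
    have -> : E k' *m (B *m v) = E k' *m (B *m (E k *m v)).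
      rewrite Ehv (bigD1 k) //= big1 ?addr0; first by rewrite !mulmxA.
      move=> h' hk; have [lt|ge] := ltnP h' (j0 - l).
        by rewrite -mulmxA hvlow // mulmx0.
      have lt2 : (k'.+1 < h')%N.
        rewrite ek'; move: hk ge; rewrite -val_eqE /= ek; lia.
      by rewrite (tri_low x lt2) mul0mx.
    apply/negP => /eqP H0.
    apply: (lower_contra (k' := k') (k := k) hirr _ _ (ex_intro2 _ _ v hv hv0)).
    + by rewrite ek ek'; lia.
    + by rewrite ek; lia.
    move=> w hw.
    have hkv : inW (imW (E k) W) (E k *m v) by apply/imWP; exists v.
    have hkw : inW (imW (E k) W) (E k *m w) by apply/imWP; exists w.
    have [c ->] := rank1_dep (hthin k) hkv hkw hv0.
    by rewrite -scalemxAr -scalemxAr H0 scaler0.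
  - move=> h hh; rewrite Ehv big1 // => h' _.
    have [lt|ge] := ltnP h' (j0 - l).
      by rewrite -mulmxA hvlow // mulmx0.
    have lt2 : (h.+1 < h')%N by lia.
    by rewrite (tri_low x lt2) mul0mx.
(* polynomial argument *)
pose p := \prod_(a <- [seq th i | i <- enum I]) ('X - a%:P).
have hsz : size p = m.+1 by rewrite size_prod_XsubC size_map -cardE.
have hmon : p`_m = 1.
  have : p \is monic by apply: monic_prod_XsubC.
  by move/monicP; rewrite lead_coefE hsz.
pose pB := \sum_(k < m.+1) p`_k *: mpow B k.
have pBu : pB *m u = 0.
  rewrite u_dec mulmx_sumr big1 // => i hi.
  rewrite mulmx_suml.
  under eq_bigr do rewrite -scalemxAl Bpow scalerA.
  rewrite -scaler_suml -horner_coef_wide ?hsz //.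
  have : root p (th i) by rewrite root_prod_XsubC; apply: map_f; rewrite mem_enum.
  by move/rootP => ->; rewrite scale0r.
have [_ hm0 _] := chain m mle.
move/negP: hm0 => hm0; exfalso; apply: hm0; apply/eqP.
have : E (inord (j0 - m)) *m (pB *m u) = 0 by rewrite pBu mulmx0.
rewrite mulmx_suml mulmx_sumr big_ord_recr /= big1 ?add0r.
  by rewrite -scalemxAl -scalemxAr hmon scale1r => ->.
move=> k _; have kle : (k <= j0 - r)%N by have := ltn_ord k; lia.
have [_ _ hlow] := chain k kle.
rewrite -scalemxAl -scalemxAr hlow ?scaler0 //.
rewrite inordK; [have := ltn_ord k; lia | rewrite ltnS; lia].
Qed.


(* ---------- the primary module ---------- *)
Definition ex : 'cV[algC]_n := delta_mx x ord0.
Definition P0 : 'M[algC]_(D.+1, n) := \matrix_(k < D.+1) (A k *m ex)^T.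
Definition Pm : 'M[algC]_n := <<P0>>%MS.

Lemma BM_inP M : BM M -> inW Pm (M *m ex).
Proof.
move=> [c ->]; rewrite /inW /Pm genmxE mulmx_suml raddf_sum /=.
apply: summx_sub => k _; rewrite -scalemxAl linearZ /=; apply: scalemx_sub.
by apply: (eq_row_sub k); rewrite rowK.
Qed.

Lemma inP_BM v : inW Pm v -> exists2 M, BM M & v = M *m ex.
Proof.
rewrite /inW /Pm genmxE => /submxP [a ha].
exists (\sum_k a 0 k *: A k).
  by apply: BM_sum => k _; apply: BMZ; exact: BMA.
apply: trmx_inj; rewrite ha mulmx_sum_row mulmx_suml raddf_sum /=.
by apply: eq_bigr => k _; rewrite rowK -scalemxAl linearZ.
Qed.

Lemma Aex k : A k *m ex = Estar A x k *m const_mx 1.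
Proof.
apply/matrixP => y z; rewrite /ex -colE mul_diag_mx !mxE mulr1.
by rewrite -[in LHS](A_sym k) mxE.
Qed.

Lemma P_T : is_Tmodule A E x Pm.
Proof.
have [th hth] := B_Estar.
apply: Tgen => [i v /inP_BM [M hM ->] | v /inP_BM [M [c ->] ->]].
  by rewrite mulmxA; apply: BM_inP; apply: BMM => //; exact: BMA.
have -> : B *m ((\sum_k c k *: A k) *m ex) = (\sum_k (c k * th k) *: A k) *m ex.
  rewrite !mulmx_suml mulmx_sumr; apply: eq_bigr => k _.
  by rewrite -!scalemxAl -scalemxAr Aex mulmxA hth -scalemxAl scalerA.
by apply: BM_inP; apply: BM_sum => k _; apply: BMZ; exact: BMA.
Qed.

Lemma E0_inP w : inW Pm (E ord0 *m w).
Proof.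
have [h0 _ _ _ _] := hE; have [_ hJ _ _ _] := hA.
have hJB : BM (const_mx 1) by rewrite -hJ; apply: BM_sum => k _; exact: BMA.
have -> : E ord0 *m w = ((n%:R)^-1 * \sum_z w z ord0) *: const_mx 1 *m ex.
  apply/matrixP => y z; rewrite (ord1 z) h0 /ex -colE !mxE mulr1 mulr_sumr.
  by apply: eq_bigr => z' _; rewrite !mxE mulr1.
by apply: BM_inP; apply: BMZ.
Qed.

Lemma orth_anti (U W : 'M[algC]_n) v : (U <= W)%MS -> inW (orth W) v -> inW (orth U) v.
Proof.
move=> hUW /orthP h; apply/orthP => w hw; apply: h.
exact: submx_trans hw hUW.
Qed.

Lemma inW_sub (U W : 'M[algC]_n) v : (U <= W)%MS -> inW U v -> inW W v.
Proof. by move=> hUW hv; exact: submx_trans hv hUW. Qed.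

Lemma inW_zero (v : 'cV[algC]_n) : inW (0 : 'M[algC]_n) v -> v = 0.
Proof.
by rewrite /inW submx0 => /eqP /(congr1 trmx); rewrite trmxK trmx0.
Qed.

Lemma Zlem (chi : 'cV[algC]_n) (t : nat)
  (H1 : forall W : 'M[algC]_n, irreducible_Tmodule A E x W ->
     (1 <= rstar E W <= t)%N ->
     (#|[set i in Wsupport A x W | Estar A x i *m chi != 0]|%:Z
        <= (deltastar E chi)%:Z - (rstar E W)%:Z)%R)
  (H2 : forall W : 'M[algC]_n, irreducible_Tmodule A E x W ->
     (rstar E W <= t)%N -> dual_thin E W) m :
  forall W : 'M[algC]_n, (\rank W <= m)%N -> is_Tmodule A E x W ->
  (W <= orth Pm)%MS ->
  forall u, inW W u -> inW (orth W) (chi - u) ->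
  forall F (j : 'I_D.+1), inT A E x F -> (1 <= j <= t)%N -> E j *m (F *m u) = 0.
Proof.
elim: m => [|m IH] W hrk hW hWP u hu hcu F j hF hj.
  have W0 : W = 0 by apply/eqP; rewrite -mxrank_eq0 -leqn0.
  by move: hu; rewrite W0 => /inW_zero ->; rewrite !mulmx0.
case: (eqVneq W 0) => [W0 | W0].
  by move: hu; rewrite W0 => /inW_zero ->; rewrite !mulmx0.
case: (classic (irreducible_Tmodule A E x W)) => [hirr | hnirr].
  have [j1 [hj1 hj1W]] := rstar_att W0.
  have hr1 : (1 <= rstar E W)%N.
    rewrite lt0n; apply/eqP => r0.
    have ej1 : j1 = ord0 by apply: val_inj; rewrite /= hj1 r0.
    have [w hw hEw] := imW_neq0 hj1W; move: hEw; rewrite ej1.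
    have h1 : inW W (E ord0 *m w) by apply: (hW); [exact: E_T | exact: hw].
    have h2 : inW (orth Pm) (E ord0 *m w) := inW_sub hWP h1.
    by rewrite (orth_inter (E0_inP w) h2) eqxx.
  case: (leqP (rstar E W) t) => hrt.
    have hr1t : (1 <= rstar E W <= t)%N by rewrite hr1 hrt.
    by rewrite (core hirr hr1 (H2 W hirr hrt) (H1 W hirr hr1t) hu hcu) !mulmx0.
  have : imW (E j) W == 0.
    apply: contraTT hrt => H; rewrite -leqNgt.
    by apply: leq_trans (rstar_le H) _; case/andP: hj.
  move=> /imW0P; apply; apply: (hW) => //.
have [U [hU hUW U0 nUW]] : exists U, [/\ is_Tmodule A E x U, (U <= W)%MS, U != 0 & ~~ (U == W)%MS].
  apply: NNPP => hne; apply: hnirr; split => // U hU hUW.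
  case: (eqVneq U 0) => [->|U0]; first by left.
  case e : (U == W)%MS; first by right.
  by exfalso; apply: hne; exists U; split => //; rewrite e.
have rU : (\rank U <= m)%N.
  have h := mxrank_leqif_eq hUW.
  by rewrite -ltnS (leq_trans _ hrk) // ltn_neqAle h.1 (h.2) nUW.
set W2 := (W :&: orth U)%MS.
have W2W : (W2 <= W)%MS by exact: capmxSl.
have rW2 : (\rank W2 <= m)%N.
  have h := mxrank_leqif_sup W2W.
  rewrite -ltnS (leq_trans _ hrk) // ltn_neqAle h.1 andbT (h.2).
  apply/negP => hWW2; move: U0; apply/negP; rewrite negbK.
  apply/eqP/row_matrixP => i; rewrite row0; apply: trmx_inj; rewrite trmx0.
  have hv : inW U (row i U)^T by rewrite /inW trmxK row_sub.
  apply: (orth_inter hv).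
  have : inW W2 (row i U)^T by apply: inW_sub hWW2 (inW_sub hUW hv).
  by rewrite /W2 inW_cap => /andP [].
have hW2 : is_Tmodule A E x W2 by apply: cap_T => //; exact: orth_T.
have [u1 [u2 [hu1 hu2 eu]]] := orth_decomp U u.
have hu2W : inW W u2.
  have -> : u2 = u + (-1) *: u1 by rewrite eu scaleN1r addrC addKr.
  by apply: inW_add => //; apply: inW_scale; exact: inW_sub hUW hu1.
have hcu1 : inW (orth U) (chi - u1).
  have -> : chi - u1 = (chi - u) + u2 by rewrite eu opprD addrA subrK.
  by apply: inW_add => //; exact: orth_anti hUW hcu.
have hcu2 : inW (orth W2) (chi - u2).
  have -> : chi - u2 = (chi - u) + u1 by rewrite eu opprD addrA addrAC subrK.
  apply: inW_add; first exact: orth_anti W2W hcu.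
  apply/orthP => w; rewrite /W2 inW_cap => /andP [_ /orthP hw].
  by rewrite dot_conj hw // rmorph0.
rewrite eu !mulmxDr.
rewrite (IH U rU hU (submx_trans hUW hWP) u1 hu1 hcu1 F j hF hj).
have hu2' : inW W2 u2 by rewrite /W2 inW_cap hu2W hu2.
by rewrite (IH W2 rW2 hW2 (submx_trans W2W hWP) u2 hu2' hcu2 F j hF hj) addr0.
Qed.


Lemma main_sec (chi : 'cV[algC]_n) (t : nat)
  (H1 : forall W : 'M[algC]_n, irreducible_Tmodule A E x W ->
     (1 <= rstar E W <= t)%N ->
     (#|[set i in Wsupport A x W | Estar A x i *m chi != 0]|%:Z
        <= (deltastar E chi)%:Z - (rstar E W)%:Z)%R)
  (H2 : forall W : 'M[algC]_n, irreducible_Tmodule A E x W ->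
     (rstar E W <= t)%N -> dual_thin E W)
  (F : 'M[algC]_n) : inT A E x F -> rel_design E t x (F *m chi).
Proof.
move=> hF j hj.
have [p [q [hp hq echi]]] := orth_decomp Pm chi.
have hQ := orth_T P_T.
have hcq : inW (orth (orth Pm)) (chi - q) by rewrite echi addrK; exact: orth_orth.
have Zq := Zlem H1 H2 (leqnn _) hQ (submx_refl _) hq hcq hF hj.
have [M hM eM] := inP_BM (P_T hF hp).
have [c hc] := BM_mul_E j hM.
exists 1, (- c); split; first by left; exact: oner_neq0.
rewrite echi mulmxDr mulmxDr Zq addr0 eM mulmxA (BM_comm (E_BM j) hM) hc.
by rewrite scale1r -scalemxAl /ex scaleNr addrN.
Qed.

End S.

Unset Implicit Arguments.

Theorem corollary4p6 (n D : nat) (A E : 'I_D.+1 -> 'M[algC]_n) (x : 'I_n)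
  (chi : 'cV[algC]_n) (t : nat) :
  is_sym_assoc_scheme A -> is_prim_idems A E -> is_cometric E ->
  is_code A E chi -> (1 <= t <= D)%N ->
  (forall W : 'M[algC]_n, irreducible_Tmodule A E x W ->
     (1 <= rstar E W <= t)%N ->
     (#|[set i in Wsupport A x W | Estar A x i *m chi != 0]|%:Z
        <= (deltastar E chi)%:Z - (rstar E W)%:Z)%R) ->
  (forall W : 'M[algC]_n, irreducible_Tmodule A E x W ->
     (rstar E W <= t)%N -> dual_thin E W) ->
  forall F : 'M[algC]_n, inT A E x F -> rel_design E t x (F *m chi).
Proof.
move=> hA hE hC _ _ H1 H2 F hF.
exact: (main_sec hA hE hC H1 H2 hF).
Qed.
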